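(* Let $(\mathcal{S}_1,\mathcal{S}_2)$ be an $S$-pair, let $A \subseteq S$, $x \in A$, $i \in \{1,2\}$, and let $j \ge 2$ be an integer with $j \le |A|$. Suppose every $j$-element subset of $A$ containing $x$ lies in $\mathcal{S}_i$. Then every $j$-element subset of $A$ lies in $\mathcal{S}_i$, and $A \in \mathcal{S}_i$.
   Context: Let $S$ be a finite nonempty set and $\mathcal{S}_1, \mathcal{S}_2 \subseteq 2^S$. The pair $(\mathcal{S}_1,\mathcal{S}_2)$ is an $S$-pair if: (S1) for $i=1,2$, if $A,B \in \mathcal{S}_i$ with $B \subset A$ and $|A| = |B|+1$, then every $|B|$-element subset of $A$ lies in $\mathcal{S}_i$; (S2) for $i=1,2$, if $A,B \in \mathcal{S}_i$ with $|A|=|B|$ and $|A\cap B| = |A|-1$, then $A\cup B \in \mathcal{S}_i$; (S3) for $i=1,2$, not every singleton $\{s\}$, $s\in S$, lies in $\mathcal{S}_i$, and $S \notin \mathcal{S}_i$; (S4) for $k = 1,\dots,|S|-1$ and $x\in S$, if every $k$-element subset of $S - x$ lies in $\mathcal{S}_1$, then not every $(|S|-k)$-element subset of $S-x$ lies in $\mathcal{S}_2$. *)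

(* Defs.v *)
From mathcomp Require Import all_boot.
Set Implicit Arguments. Unset Strict Implicit. Unset Printing Implicit Defensive.

(* The ground set S is the whole finite type T (nonempty: 0 < #|T|);
   families of subsets of S are elements of {set {set T}}. *)

Definition condS1 (T : finType) (F : {set {set T}}) : Prop :=
  forall A B : {set T}, A \in F -> B \in F -> B \proper A -> #|A| = #|B| + 1 ->
    forall C : {set T}, C \subset A -> #|C| = #|B| -> C \in F.

Definition condS2 (T : finType) (F : {set {set T}}) : Prop :=
  forall A B : {set T}, A \in F -> B \in F -> #|A| = #|B| ->
    #|A :&: B| = #|A| - 1 -> A :|: B \in F.

Definition condS3 (T : finType) (F : {set {set T}}) : Prop :=
  ~ (forall s : T, [set s] \in F) /\ [set: T] \notin F.

Definition condS4 (T : finType) (F1 F2 : {set {set T}}) : Prop :=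
  forall (k : nat) (x : T), 1 <= k <= #|T| - 1 ->
    (forall C : {set T}, C \subset [set: T] :\ x -> #|C| = k -> C \in F1) ->
    ~ (forall C : {set T}, C \subset [set: T] :\ x -> #|C| = #|T| - k -> C \in F2).

Definition S_pair (T : finType) (F1 F2 : {set {set T}}) : Prop :=
  [/\ condS1 F1 /\ condS1 F2, condS2 F1 /\ condS2 F2,
      condS3 F1 /\ condS3 F2 & condS4 F1 F2].

Definition Ssel (T : finType) (F1 F2 : {set {set T}}) (i : nat) : {set {set T}} :=
  if i == 1 then F1 else F2.

(* Main.v *)
Require Import Defs.
From mathcomp Require Import all_boot.
From mathcomp Require Import zify.

Lemma L2 (T : finType) (F : {set {set T}}) (D : {set T}) (c1 c2 : T) :
  condS2 F -> c1 \in D -> c2 \in D -> c1 != c2 ->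
  D :\ c1 \in F -> D :\ c2 \in F -> D \in F.
Proof.
move=> S2 h1 h2 ne f1 f2.
have E : (D :\ c1) :|: (D :\ c2) = D.
  apply/setP=> y; rewrite !inE.
  case: (y \in D); rewrite ?andbF ?andbT //=.
  by case: (y =P c1) => // ->.
have I : (D :\ c1) :&: (D :\ c2) = (D :\ c1) :\ c2.
  apply/setP=> y; rewrite !inE.
  by case: (y == c1); case: (y == c2); case: (y \in D).
have k1 := cardsD1 c1 D; have k2 := cardsD1 c2 D.
have k3 := cardsD1 c2 (D :\ c1).
rewrite h1 in k1; rewrite h2 in k2.
have h2' : c2 \in D :\ c1 by rewrite !inE h2 eq_sym ne.
rewrite h2' in k3.
rewrite -E; apply: S2 => //; first lia.
rewrite I; lia.
Qed.

Lemma up (T : finType) (F : {set {set T}}) (A : {set T}) (k : nat) :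
  condS2 F -> 2 <= k ->
  (forall B : {set T}, B \subset A -> #|B| = k -> B \in F) ->
  forall m, k + m <= #|A| -> forall B : {set T}, B \subset A -> #|B| = k + m -> B \in F.
Proof.
move=> S2 hk H; elim=> [|m IH] hm B sB cB; first by rewrite addn0 in cB; apply: H.
have : 1 < #|B| by lia.
case/card_gt1P=> [c1 [c2 [h1 h2 ne]]].
have k1 := cardsD1 c1 B; have k2 := cardsD1 c2 B.
rewrite h1 in k1; rewrite h2 in k2.
apply: (@L2 T F B c1 c2 S2 h1 h2 ne); apply: IH; try lia;
  apply: subset_trans sB; apply: subsetDl.
Qed.

Theorem mainTheorem7 (T : finType) (F1 F2 : {set {set T}}) (A : {set T}) (x : T)
    (i j : nat) :
  0 < #|T| -> S_pair F1 F2 ->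
  x \in A -> (i = 1 \/ i = 2) -> 2 <= j -> j <= #|A| ->
  (forall B : {set T}, B \subset A -> #|B| = j -> x \in B -> B \in Ssel F1 F2 i) ->
  (forall B : {set T}, B \subset A -> #|B| = j -> B \in Ssel F1 F2 i) /\
  A \in Ssel F1 F2 i.
Proof.
move=> _ [[S11 S12] [S21 S22] _ _] xA hi j2 jA H.
set F := Ssel F1 F2 i in H *.
have S1 : condS1 F by rewrite /F /Ssel; case: (i == 1).
have S2 : condS2 F by rewrite /F /Ssel; case: (i == 1).
have C1 : forall B : {set T}, B \subset A -> #|B| = j -> B \in F.
  move=> B sB cB.
  case xB: (x \in B); first by apply: H.
  have : 1 < #|B| by rewrite cB.
  case/card_gt1P=> [b1 [b2 [h1 h2 ne]]].
  set D := x |: B.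
  have sD : D \subset A by rewrite subUset sub1set xA sB.
  have cD : #|D| = j + 1 by rewrite cardsU1 xB cB addnC.
  have k1 := cardsD1 b1 D; have k2 := cardsD1 b2 D.
  have d1 : b1 \in D by rewrite !inE h1 orbT.
  have d2 : b2 \in D by rewrite !inE h2 orbT.
  rewrite d1 in k1; rewrite d2 in k2.
  have xb1 : x != b1 by apply/eqP=> e; rewrite e h1 in xB.
  have xb2 : x != b2 by apply/eqP=> e; rewrite e h2 in xB.
  have e1 : #|D :\ b1| = j by clear -k1 cD; lia.
  have e2 : #|D :\ b2| = j by clear -k2 cD; lia.
  have f1 : D :\ b1 \in F.
    apply: H; [apply: subset_trans sD; apply: subsetDl|by []|by rewrite !inE xb1 eqxx].
  have f2 : D :\ b2 \in F.
    apply: H; [apply: subset_trans sD; apply: subsetDl|by []|by rewrite !inE xb2 eqxx].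
  have fD : D \in F := @L2 T F D b1 b2 S2 d1 d2 ne f1 f2.
  have p1 : D :\ b1 \proper D by rewrite properD1.
  have c1 : #|D| = #|D :\ b1| + 1 by rewrite e1.
  have s1 : B \subset D by rewrite subsetUr.
  have c2 : #|B| = #|D :\ b1| by rewrite e1.
  exact: (S1 D (D :\ b1) fD f1 p1 c1 B s1 c2).
split=> //.
have := @up T F A j S2 j2 C1 (#|A| - j); apply; [clear -jA; lia|exact: subxx|clear -jA; lia].
Qed.
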